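(* Let $X$ be a nonempty open bounded subset of $\mathbb{R}^n$. Suppose a sequence $(F_k)_k$ in $C_{cm}(X,\mathbb{R}^n)$ converges (for the metric $s$) to $F\in C_{cm}(X,\mathbb{R}^n)$, a sequence of points $x_k\in X$ converges to $x\in X$, a sequence of vectors $\eta_k\in\mathbb{R}^n$ converges to $\eta\in\mathbb{R}^n$, and $\eta_k\in F_k(x_k)$ for every $k$. Then $\eta\in F(x)$. The same holds with $C_{cm}(X,\mathbb{R}^n)$ and $s$ replaced by $C_{ae}(X,\mathbb{R}^n)$ and $r$.
   Context: Comeager = complement is a countable union of nowhere dense subsets of $X$. $C_{cm}(X,\mathbb{R}^m)$: classes of bounded maps $X\to\mathbb{R}^m$ continuous on a comeager set, modulo coincidence on a comeager set; $C_{ae}(X,\mathbb{R}^m)$: classes of bounded maps continuous a.e., modulo coincidence a.e. For $\xi\in\mathbb{R}^m$, $\langle f(\cdot),\xi\rangle$ is the real class of $x\mapsto\langle\varphi(x),\xi\rangle$. For real classes and $k\in\mathbb{N}$: $f_k^-=\sup\{\varphi\in Lip_k(X,\mathbb{R}):\varphi\le f\}$, $f_k^+=\inf\{\varphi\in Lip_k(X,\mathbb{R}):\varphi\ge f\}$; $h(\varphi,\psi)$ is the Hausdorff distance of closures of graphs in $\mathrm{cl}X\times\mathbb{R}$ of bounded continuous functions, $\delta=h+\int_X|\varphi-\psi|dx$; $s(f,g)=\sup_k\max\{h(f_k^-,g_k^-),h(f_k^+,g_k^+)\}$, $r(f,g)=\sup_k\max\{\delta(f_k^-,g_k^-),\delta(f_k^+,g_k^+)\}$;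 for vector classes $s(f,g)=\sup_{\|\xi\|=1}s(\langle f,\xi\rangle,\langle g,\xi\rangle)$ and likewise $r$. The value of a class $f$ at $x$ is $f(x)=\bigcap_{\varepsilon>0}\overline{\mathrm{co}}\{\varphi(y):y\in B(x,\varepsilon)\cap C_\varphi\}$ for a representative $\varphi$ with continuity set $C_\varphi$ (independent of $\varphi$). *)

(* Defs.v *)
From HB Require Import structures.
From mathcomp Require Import all_boot all_order all_algebra.
From mathcomp Require Import all_classical all_reals all_analysis.
Set Implicit Arguments. Unset Strict Implicit. Unset Printing Implicit Defensive.
Import Order.TTheory GRing.Theory Num.Theory.
Import numFieldNormedType.Exports.
Local Open Scope classical_set_scope.
Local Open Scope ring_scope.

Section Defs.
Variables (R : realType) (n : nat).
Notation V := 'rV[R]_n.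

Definition dotp (u v : V) : R := \sum_(i < n) u ord0 i * v ord0 i.
Definition enorm (u : V) : R := Num.sqrt (dotp u u).
Definition eball (x : V) (e : R) : set V := [set y | enorm (y - x) < e].

Definition pdist (p q : V * R) : R :=
  Num.sqrt (enorm (p.1 - q.1) ^+ 2 + (p.2 - q.2) ^+ 2).
Definition pt_set_dist (p : V * R) (A : set (V * R)) : R :=
  inf [set pdist p q | q in A].
Definition hausdorff (A B : set (V * R)) : R :=
  Num.max (sup [set pt_set_dist a B | a in A]) (sup [set pt_set_dist b A | b in B]).

Variable X : set V.

Definition bounded_set_e (A : set V) := exists M : R, forall x, A x -> enorm x <= M.
Definition bounded_on {T} (nm : T -> R) (f : V -> T) :=
  exists M : R, forall x, X x -> nm (f x) <= M.

Definition graph (f : V -> R) : set (V * R) := [set p | X p.1 /\ p.2 = f p.1].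
Definition hdist (f g : V -> R) : R := hausdorff (closure (graph f)) (closure (graph g)).

(* Lebesgue integral over X of a nonnegative function, computed as an
   iterated (Tonelli) integral of one-dimensional Lebesgue integrals *)
Fixpoint iter_int (m : nat) : ('rV[R]_m -> \bar R) -> \bar R :=
  match m return ('rV[R]_m -> \bar R) -> \bar R with
  | 0 => fun f => f 0
  | m'.+1 => fun f =>
      (\int[@lebesgue_measure R]_(a in setT)
         iter_int (fun v : 'rV[R]_m' => f (row_mx (a%:M : 'rV[R]_1) v)))%E
  end.
Definition int_abs_diff (f g : V -> R) : R :=
  fine (iter_int (fun x => (if `[< X x >] then `|f x - g x| else 0)%:E)).
Definition ddist (f g : V -> R) : R := hdist f g + int_abs_diff f g.

Definition nowhere_dense (A : set V) := interior (closure A) = set0.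
Definition comeager (S : set V) :=
  S `<=` X /\ exists A : nat -> set V,
    (forall j, A j `<=` X /\ nowhere_dense (A j)) /\ X `\` S = \bigcup_j A j.

Definition box (a b : V) : set V := [set x | forall i, a ord0 i <= x ord0 i <= b ord0 i].
Definition vol (a b : V) : R := \prod_(i < n) (b ord0 i - a ord0 i).
Definition null_set (N : set V) :=
  forall e : R, 0 < e -> exists a b : nat -> V,
    (forall j i, a j ord0 i <= b j ord0 i) /\ N `<=` \bigcup_j box (a j) (b j) /\
    forall m, \sum_(j < m) vol (a j) (b j) < e.
Definition full_ae (S : set V) := S `<=` X /\ null_set (X `\` S).

Definition cont_set {m} (f : V -> 'rV[R]_m) : set V := [set x | X x /\ {for x, continuous f}].

(* representatives of elements of C_cm(X,R^m) and C_ae(X,R^m) *)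
Definition is_Ccm {m} (f : V -> 'rV[R]_m) :=
  bounded_on (fun v => Num.sqrt (\sum_(i < m) v ord0 i ^+ 2)) f /\ comeager (cont_set f).
Definition is_Cae {m} (f : V -> 'rV[R]_m) :=
  bounded_on (fun v => Num.sqrt (\sum_(i < m) v ord0 i ^+ 2)) f /\ full_ae (cont_set f).

Definition Lip (k : R) (f : V -> R) :=
  forall x y, X x -> X y -> `|f x - f y| <= k * enorm (x - y).

(* f_k^- and f_k^+ for a real class (given by a representative f), where
   the order between a function and a class is "on a large set", large being
   comeager (for C_cm) or full_ae (for C_ae) *)
Definition low_env (large : set V -> Prop) (f : V -> R) (k : nat) : V -> R :=
  fun x => sup [set phi x | phi in
    [set phi | Lip k%:R phi /\ exists S, large S /\ forall y, S y -> phi y <= f y]].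
Definition up_env (large : set V -> Prop) (f : V -> R) (k : nat) : V -> R :=
  fun x => inf [set phi x | phi in
    [set phi | Lip k%:R phi /\ exists S, large S /\ forall y, S y -> f y <= phi y]].

Definition scal_metric (large : set V -> Prop) (d : (V -> R) -> (V -> R) -> R)
    (f g : V -> R) : \bar R :=
  ereal_sup [set (Num.max (d (low_env large f k) (low_env large g k))
                          (d (up_env large f k) (up_env large g k)))%:E
            | k in [set k : nat | (0 < k)%N]].

Definition vec_metric (large : set V -> Prop) (d : (V -> R) -> (V -> R) -> R)
    (F G : V -> V) : \bar R :=
  ereal_sup [set scal_metric large d (fun x => dotp (F x) xi) (fun x => dotp (G x) xi)
            | xi in [set xi : V | enorm xi = 1]].

Definition s_metric := vec_metric comeager hdist.
Definition r_metric := vec_metric full_ae ddist.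

Definition conv_hull (A : set V) : set V :=
  [set z | exists (p : nat) (w : 'I_p -> R) (a : 'I_p -> V),
     (forall i, 0 <= w i /\ A (a i)) /\ \sum_(i < p) w i = 1 /\
     z = \sum_(i < p) w i *: a i].
Definition value (F : V -> V) (x : V) : set V :=
  [set eta | forall e : R, 0 < e ->
     closure (conv_hull (F @` (eball x e `&` cont_set F))) eta].

End Defs.

(* Main.v *)
Require Import Defs.
From HB Require Import structures.
From mathcomp Require Import all_boot all_order all_algebra.
From mathcomp Require Import all_classical all_reals all_analysis.
From mathcomp Require Import ring lra.
From mathcomp Require Import measurable_realfun.
Import Order.TTheory GRing.Theory Num.Theory.
Import numFieldNormedType.Exports.
Local Open Scope classical_set_scope.
Local Open Scope ring_scope.

Set Implicit Arguments. Unset Strict Implicit. Unset Printing Implicit Defensive.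

Section Basics.
Variables (R : realType) (n : nat).
Notation V := 'rV[R]_n.

Lemma dotpC (u v : V) : dotp u v = dotp v u.
Proof. by apply: eq_bigr => i _; rewrite mulrC. Qed.

Lemma dotpDl (u v w : V) : dotp (u + v) w = dotp u w + dotp v w.
Proof. by rewrite /dotp -big_split; apply: eq_bigr => i _; rewrite mxE mulrDl. Qed.

Lemma dotpNl (u w : V) : dotp (- u) w = - dotp u w.
Proof. by rewrite /dotp -sumrN; apply: eq_bigr => i _; rewrite mxE mulNr. Qed.

Lemma dotpBl (u v w : V) : dotp (u - v) w = dotp u w - dotp v w.
Proof. by rewrite dotpDl dotpNl. Qed.

Lemma dotpZl a (u w : V) : dotp (a *: u) w = a * dotp u w.
Proof. by rewrite /dotp mulr_sumr; apply: eq_bigr => i _; rewrite mxE mulrA. Qed.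

Lemma dotpDr (u v w : V) : dotp w (u + v) = dotp w u + dotp w v.
Proof. by rewrite dotpC dotpDl !(dotpC w). Qed.
Lemma dotpBr (u v w : V) : dotp w (u - v) = dotp w u - dotp w v.
Proof. by rewrite dotpC dotpBl !(dotpC w). Qed.
Lemma dotpZr a (u w : V) : dotp w (a *: u) = a * dotp w u.
Proof. by rewrite dotpC dotpZl dotpC. Qed.

Lemma dotp_suml p (F : 'I_p -> V) w :
  dotp (\sum_(i < p) F i) w = \sum_(i < p) dotp (F i) w.
Proof.
elim: p F => [|p IH] F; first by rewrite !big_ord0 /dotp big1 // => i _; rewrite mxE mul0r.
by rewrite !big_ord_recr /= dotpDl IH.
Qed.

Lemma dotp_ge0 (u : V) : 0 <= dotp u u.
Proof. by apply: sumr_ge0 => i _; rewrite -expr2 sqr_ge0. Qed.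

Lemma dotp_abs (u w : V) : `|dotp u w| <= \sum_i `|u ord0 i| * `|w ord0 i|.
Proof.
apply: (le_trans (ler_norm_sum _ _ _)); apply: ler_sum => i _.
by rewrite normrM.
Qed.

Lemma term_le_sum (F : 'I_n -> R) i : (forall j, 0 <= F j) -> F i <= \sum_j F j.
Proof.
move=> F0; rewrite (bigD1 i) //= lerDl; exact: sumr_ge0.
Qed.

Lemma coord_le_enorm (u : V) i : `|u ord0 i| <= enorm u.
Proof.
rewrite /enorm -sqrtr_sqr ler_sqrt; last exact: dotp_ge0.
rewrite /dotp expr2. have := (@term_le_sum (fun j => u ord0 j * u ord0 j) i); apply.
by move=> j; rewrite -expr2 sqr_ge0.
Qed.

Lemma enorm_ge0 (u : V) : 0 <= enorm u.
Proof. exact: sqrtr_ge0. Qed.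

Lemma enorm_le_sum (u : V) : enorm u <= \sum_i `|u ord0 i|.
Proof.
have S0 : 0 <= \sum_i `|u ord0 i| by apply: sumr_ge0.
rewrite /enorm -(ger0_norm S0) -sqrtr_sqr ler_sqrt ?sqr_ge0 //.
rewrite /dotp expr2 mulr_suml; apply: ler_sum => i _.
apply: (le_trans (ler_norm _)); rewrite normrM; apply: ler_wpM2l => //.
by have := (@term_le_sum (fun j => `|u ord0 j|) i); apply.
Qed.

Lemma dotp_sqr (u : V) : dotp u u = enorm u ^+ 2.
Proof. by rewrite /enorm sqr_sqrtr // dotp_ge0. Qed.

Lemma dotp_expand (u v : V) t :
  dotp (u - t *: v) (u - t *: v) = dotp u u - 2 * t * dotp u v + t ^+ 2 * dotp v v.
Proof.
rewrite !dotpBl !dotpBr !dotpZl !dotpZr (dotpC v u).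
by rewrite expr2; ring.
Qed.

End Basics.

Set Implicit Arguments. Unset Strict Implicit. Unset Printing Implicit Defensive.

Definition rVc (R : realType) (n : nat) := 'rV[R]_n.
HB.instance Definition _ (R : realType) (n : nat) := NormedModule.on (rVc R n).
HB.instance Definition _ (R : realType) (n : nat) := Complete.on (rVc R n).

Section Dense.
Variables (R : realType) (n : nat).
Notation V := 'rV[R]_n.
Variable X : set V.

Definition dense_in (S : set V) := forall z r, X z -> 0 < r ->
  exists y, S y /\ forall i, `|y ord0 i - z ord0 i| < r.

Lemma ball_coord (z y : V) r : ball z r y -> forall i, `|y ord0 i - z ord0 i| < r.
Proof. by move=> [_ H] i; move: (H ord0 i); rewrite /ball /= distrC. Qed.

Lemma comeager_dense S : open X -> comeager X S -> dense_in S.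
Proof.
move=> oX [SX [A [HA XS]]] z r Xz r0.
pose F := fun j => ~` closure (A j).
have oF : forall j, open (F j) /\ dense (T:=rVc R n) (F j).
  move=> j; split; first by rewrite /F openC; exact: closed_closure.
  move=> O O0 oO; apply/set0P/negP => /eqP OF.
  have : interior (closure (A j)) !=set0.
    case: O0 => o Oo; exists o.
    rewrite /interior /=; apply: (filterS (P := O)).
      move=> y Oy; apply: contrapT => ncl.
      have : (O `&` F j) y by [].
      by rewrite OF.
    by move: oO; rewrite openE => /(_ o Oo).
  by rewrite (proj2 (HA j)) => -[].
have := @Baire R (rVc R n) F oF (X `&` ball z r).
case.
- by exists z; split => //; apply: ballxx.
- apply: openI => //; exact: ball_open.
move=> y [[Xy bzy] Fy]; exists y; split; last exact: ball_coord.
apply: contrapT => nSy.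
have : (X `\` S) y by [].
rewrite XS => -[j _ Ajy].
by apply: (Fy j I); apply: subset_closure.
Qed.

End Dense.

Set Implicit Arguments. Unset Strict Implicit. Unset Printing Implicit Defensive.

Section Conv.
Variables (R : realType) (n : nat).
Notation V := 'rV[R]_n.

Lemma conv_sub (A : set V) z : A z -> conv_hull A z.
Proof.
move=> Az; exists 1%N, (fun _ => 1), (fun _ => z); split; first by move=> i; split.
by rewrite !big_ord1 scale1r.
Qed.

Lemma conv_step (A : set V) w z t : conv_hull A w -> A z -> 0 <= t <= 1 ->
  conv_hull A ((1 - t) *: w + t *: z).
Proof.
move=> [p [ww [a [Hwa [Hs ->]]]]] Az /andP[t0 t1].
exists p.+1, (fun i => if unlift ord0 i is Some i' then (1 - t) * ww i' else t),
  (fun i => if unlift ord0 i is Some i' then a i' else z); split.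
  move=> i; case: (unlift ord0 i) => [i'|]; last by [].
  by have [w0 Aa] := Hwa i'; split => //; apply: mulr_ge0 => //; rewrite subr_ge0.
rewrite !big_ord_recl !unlift_none; split.
  under eq_bigr do rewrite liftK.
  by rewrite -mulr_sumr Hs mulr1 addrC subrK.
under [X in _ = _ + X]eq_bigr do rewrite liftK.
rewrite addrC; congr (_ + _).
by rewrite scaler_sumr; apply: eq_bigr => i _; rewrite scalerA.
Qed.

Lemma conv_coord (A : set V) M w : conv_hull A w ->
  (forall z, A z -> forall i, `|z ord0 i| <= M) -> forall i, `|w ord0 i| <= M.
Proof.
move=> [p [ww [a [Hwa [Hs ->]]]]] HM i.
rewrite summxE; apply: (le_trans (ler_norm_sum _ _ _)).
apply: (@le_trans _ _ (\sum_(k < p) ww k * M)); last by rewrite -mulr_suml Hs mul1r.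
apply: ler_sum => k _; rewrite mxE normrM ger0_norm; last exact: (proj1 (Hwa k)).
by apply: ler_wpM2l; [exact: (proj1 (Hwa k)) | apply: HM; exact: (proj2 (Hwa k))].
Qed.

Lemma conv_lin (A : set V) (xi : V) C w : conv_hull A w ->
  (forall z, A z -> dotp z xi <= C) -> dotp w xi <= C.
Proof.
move=> [p [ww [a [Hwa [Hs ->]]]]] HC.
rewrite dotp_suml.
apply: (@le_trans _ _ (\sum_(k < p) ww k * C)); last by rewrite -mulr_suml Hs mul1r.
apply: ler_sum => k _; rewrite dotpZl.
by apply: ler_wpM2l; [exact: (proj1 (Hwa k)) | apply: HC; exact: (proj2 (Hwa k))].
Qed.

Lemma dotp_coord_le (u : V) i : u ord0 i ^+ 2 <= dotp u u.
Proof.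
rewrite /dotp expr2.
by have := (@term_le_sum _ _ (fun j => u ord0 j * u ord0 j) i); apply => j; rewrite -expr2 sqr_ge0.
Qed.

Lemma dotp_bound (u : V) M : (forall i, `|u ord0 i| <= M) -> dotp u u <= n%:R * M ^+ 2.
Proof.
move=> HM; rewrite /dotp.
apply: (@le_trans _ _ (\sum_(i < n) M ^+ 2)); last by rewrite sumr_const card_ord mulr_natl.
apply: ler_sum => i _; rewrite -expr2 -real_normK ?num_real //.
by apply: lerXn2r; rewrite ?nnegrE //; apply: (le_trans _ (HM i)).
Qed.

Lemma separate (A : set V) (eta : V) M r :
  A !=set0 -> (forall z, A z -> forall i, `|z ord0 i| <= M) -> 0 < r -> r <= 1 ->
  (forall w, conv_hull A w -> exists i, r <= `|eta ord0 i - w ord0 i|) ->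
  exists xi delta, enorm xi = 1 /\ 0 < delta /\
    forall z, A z -> dotp z xi <= dotp eta xi - delta.
Proof.
move=> [z0 Az0] HM r0 r1 Hsep.
pose g := fun w : V => dotp (eta - w) (eta - w).
pose E := [set g w | w in conv_hull A].
have E0 : E !=set0 by exists (g z0), z0 => //; exact: conv_sub.
have hE : has_inf E.
  split => //; exists 0 => _ [w _ <-]; exact: dotp_ge0.
pose B := n%:R * (M + M) ^+ 2.
have B0 : 0 <= B by apply: mulr_ge0 => //; exact: sqr_ge0.
pose t := r ^+ 2 / (2 * (B + 1)).
have t0 : 0 < t by apply: divr_gt0; [exact: exprn_gt0 | apply: mulr_gt0 => //; exact: ltr_wpDl].
have tB : t * (2 * (B + 1)) = r ^+ 2.
  by rewrite /t mulfVK // mulf_neq0 // gt_eqF // ltr_wpDl.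
have t1 : t <= 1.
  have : r ^+ 2 <= 1 by rewrite expr_le1 // ltW.
  have := mulr_ge0 (ltW t0) B0.
  move: tB; rewrite mulrDr mulrDr mulr1; lra.
pose eps := t * r ^+ 2 / 2.
have eps0 : 0 < eps by apply: divr_gt0 => //; apply: mulr_gt0 => //; exact: exprn_gt0.
have [_ [w Cw <-] gw] := inf_adherent eps0 hE.
pose u := eta - w.
have key : forall z, A z -> dotp u (z - w) <= r ^+ 2 / 2.
  move=> z Az.
  have Cwt := conv_step Cw Az (t := t).
  have : inf E <= g ((1 - t) *: w + t *: z).
    apply: (ge_inf (proj2 hE)); exists ((1 - t) *: w + t *: z) => //.
    by apply: Cwt; rewrite ltW.
  rewrite [X in _ <= X]/g.
  have -> : eta - ((1 - t) *: w + t *: z) = u - t *: (z - w).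
    by apply/rowP => i; rewrite !mxE; ring.
  rewrite dotp_expand -/u.
  have Bz : dotp (z - w) (z - w) <= B.
    apply: dotp_bound => i; rewrite !mxE; apply: (le_trans (ler_normB _ _)).
    by apply: lerD; [exact: HM | exact: (conv_coord Cw HM)].
  move: gw; rewrite /eps => gw.
  have tt : t ^+ 2 * dotp (z - w) (z - w) <= t ^+ 2 * B by apply: ler_wpM2l => //; exact: sqr_ge0.
  set X1 := dotp u (z - w); set D := inf E; set G := g w.
  move=> HD.
  have h1 : 2 * t * X1 < t * r ^+ 2 / 2 + t ^+ 2 * B.
    move: gw HD tt; rewrite /G /g -/u; lra.
  have h2 : t * B <= r ^+ 2 / 2 by nra.
  nra.
have [i0 Hi0] := Hsep w Cw.
have uu : r ^+ 2 <= dotp u u.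
  apply: le_trans (dotp_coord_le u i0).
  rewrite -[u ord0 i0 ^+ 2]real_normK ?num_real // /u !mxE.
  by rewrite lerXn2r ?nnegrE // ltW.
have uu0 : 0 < dotp u u by apply: lt_le_trans uu; exact: exprn_gt0.
pose s := Num.sqrt (dotp u u).
have s0 : 0 < s by rewrite sqrtr_gt0.
have ss : s ^+ 2 = dotp u u by rewrite sqr_sqrtr // ltW.
exists (s^-1 *: u), (s^-1 * (r ^+ 2 / 2)); split; [|split].
- rewrite /enorm dotpZl dotpZr -ss mulrA -expr2 exprVn mulVf ?sqrtr1 //.
  by rewrite expf_neq0 // gt_eqF.
- by apply: mulr_gt0; rewrite ?invr_gt0 // divr_gt0 // exprn_gt0.
- move=> z Az; rewrite !dotpZr -mulrBr.
  apply: ler_wpM2l; first by rewrite invr_ge0 ltW.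
  have := key z Az.
  rewrite dotpBr !(dotpC u) => hk.
  have -> : dotp eta u = dotp u u + dotp w u.
    by rewrite -dotpDl /u subrK.
  move: hk uu; lra.
Qed.

End Conv.

Set Implicit Arguments. Unset Strict Implicit. Unset Printing Implicit Defensive.

Section Core.
Variables (R : realType) (n : nat).
Notation V := 'rV[R]_n.
Variable X : set V.

Lemma coord_ball (y y' : V) r : 0 < r -> (forall i, `|y' ord0 i - y ord0 i| < r) -> ball y r y'.
Proof. by move=> r0 H; split => // i j; rewrite (ord1 i) /ball /= distrC. Qed.

Lemma sum_coord_le (u : V) r : (forall i, `|u ord0 i| <= r) -> \sum_i `|u ord0 i| <= n%:R * r.
Proof.
move=> H; apply: (@le_trans _ _ (\sum_(i < n) r)); last by rewrite sumr_const card_ord mulr_natl.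
by apply: ler_sum => i _.
Qed.

Lemma enorm_coord_le (u : V) r : (forall i, `|u ord0 i| <= r) -> enorm u <= n%:R * r.
Proof. by move=> H; apply: le_trans (enorm_le_sum u) _; exact: sum_coord_le. Qed.

Lemma dotp_diff (u v xi : V) r : (forall i, `|u ord0 i - v ord0 i| <= r) ->
  `|dotp u xi - dotp v xi| <= r * \sum_i `|xi ord0 i|.
Proof.
move=> H; rewrite -dotpBl; apply: (le_trans (dotp_abs _ _)).
rewrite mulr_sumr; apply: ler_sum => i _; apply: ler_wpM2r => //.
by rewrite !mxE; exact: H.
Qed.

Variable large : set V -> Prop.
Hypothesis large_dense : forall S, large S -> S `<=` X /\ dense_in X S.

Definition upset (f : V -> R) (k : nat) :=
  [set phi : V -> R | Lip X k%:R phi /\ exists S, large S /\ forall y, S y -> f y <= phi y].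

Lemma up_envE f k z : up_env X large f k z = inf [set phi z | phi in upset f k].
Proof. by []. Qed.

Lemma env_lb (f : V -> R) B k z phi : (forall y, X y -> `|f y| <= B) -> X z ->
  upset f k phi -> - B - k%:R * n%:R <= phi z.
Proof.
move=> fB Xz [Lphi [S [lS HS]]].
have [SX dS] := large_dense lS.
have [y [Sy Hy]] := dS z 1 Xz ltr01.
have Xy := SX y Sy.
have e1 : enorm (z - y) <= n%:R * 1.
  apply: enorm_coord_le => i; rewrite !mxE distrC; exact: ltW.
have := Lphi z y Xz Xy.
have := HS y Sy.
have := fB y Xy.
rewrite mulr1 in e1.
have := mulr_ge0 (ler0n R k) (enorm_ge0 (z - y)).
have := ler_wpM2l (ler0n R k) e1.
rewrite !ler_norml.
move=> h1 h2 /andP[h3 h4] h5 /andP[h6 h7]; lra.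
Qed.

Lemma cst_upset (f : V -> R) B k S0 : large S0 -> (forall y, X y -> `|f y| <= B) ->
  upset f k (fun _ => B).
Proof.
move=> lS0 fB; split.
  by move=> x y _ _; rewrite subrr normr0; apply: mulr_ge0 => //; exact: enorm_ge0.
exists S0; split => // y Sy; have := fB y ((proj1 (large_dense lS0)) y Sy).
by rewrite ler_norml => /andP[].
Qed.

Lemma up_env_le (f : V -> R) B k z phi : (forall y, X y -> `|f y| <= B) -> X z ->
  upset f k phi -> up_env X large f k z <= phi z.
Proof.
move=> fB Xz Hphi; rewrite up_envE.
apply: (ge_inf); last by exists phi.
exists (- B - k%:R * n%:R) => _ [psi Hpsi <-]; exact: env_lb fB Xz Hpsi.
Qed.

Lemma up_env_bound (f : V -> R) B k z S0 : large S0 -> (forall y, X y -> `|f y| <= B) -> X z ->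
  `|up_env X large f k z| <= B + k%:R * n%:R.
Proof.
move=> lS0 fB Xz; rewrite ler_norml; apply/andP; split.
  rewrite opprD up_envE; apply: lb_le_inf.
    by exists B, (fun _ => B) => //; exact: (cst_upset k lS0 fB).
  by move=> _ [psi Hpsi <-]; exact: env_lb fB Xz Hpsi.
apply: le_trans (up_env_le fB Xz (cst_upset k lS0 fB)) _.
by rewrite lerDl; apply: mulr_ge0.
Qed.

End Core.

Set Implicit Arguments. Unset Strict Implicit. Unset Printing Implicit Defensive.

Section Core2.
Variables (R : realType) (n : nat).
Notation V := 'rV[R]_n.
Variable X : set V.
Variable large : set V -> Prop.
Hypothesis large_dense : forall S, large S -> S `<=` X /\ dense_in X S.

Lemma value_le (G : V -> V) xj etaj (xi : V) psi k :
  X xj -> value X G xj etaj -> Lip X k%:R psi ->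
  (exists S, large S /\ forall y, S y -> dotp (G y) xi <= psi y) ->
  dotp etaj xi <= psi xj.
Proof.
move=> Xxj Hv Lpsi [S [lS HS]].
have [SX dS] := large_dense lS.
rewrite leNgt; apply/negP => Hlt.
pose gam := dotp etaj xi - psi xj.
have gam0 : 0 < gam by rewrite subr_gt0.
pose sig := \sum_i `|xi ord0 i| + 1.
have sig0 : 0 < sig by rewrite ltr_pwDr // sumr_ge0.
pose kk := k%:R : R.
have kk0 : 0 <= kk by [].
pose rho := gam / (4 * (kk + 1)).
have rho0 : 0 < rho by apply: divr_gt0 => //; apply: mulr_gt0 => //; exact: ltr_wpDl.
have krho : kk * rho <= gam / 4.
  have : rho * (4 * (kk + 1)) = gam by rewrite /rho mulfVK // mulf_neq0 // gt_eqF // ltr_wpDl.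
  have := mulr_ge0 kk0 (ltW rho0); nra.
pose C := psi xj + gam / 2.
have claim : forall y, eball xj rho y -> cont_set X G y -> dotp (G y) xi <= C.
  move=> y Ey [Xy cGy].
  have h1 : psi y <= psi xj + gam / 4.
    have := Lpsi y xj Xy Xxj; rewrite ler_norml => /andP[_ h].
    have : kk * enorm (y - xj) <= kk * rho by apply: ler_wpM2l => //; exact: ltW.
    move: h krho; rewrite /kk; lra.
  pose e1 := gam / (8 * sig).
  have e10 : 0 < e1 by apply: divr_gt0 => //; apply: mulr_gt0.
  have := cGy _ (nbhsx_ballx (G y) e1 e10).
  move=> /nbhs_ballP [r1 r10 Hr1].
  pose kn := kk * n%:R.
  have kn0 : 0 <= kn by apply: mulr_ge0.
  pose r2 := Num.min r1 (gam / (8 * (kn + 1))).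
  have r20 : 0 < r2.
    by rewrite lt_min r10 /= divr_gt0 // mulr_gt0 // ltr_wpDl.
  have [y' [Sy' Hy']] := dS y r2 Xy r20.
  have Xy' := SX y' Sy'.
  have b1 : ball y r1 y'.
    by apply: coord_ball => // i; apply: lt_le_trans (Hy' i) _; rewrite ge_min lexx.
  have [_ bG] := Hr1 y' b1.
  have h2 : `|dotp (G y) xi - dotp (G y') xi| <= gam / 8.
    apply: le_trans (@dotp_diff _ _ (G y) (G y') xi e1 _) _.
      move=> i; move: (bG ord0 i); rewrite /ball /= => h; exact: ltW.
    have -> : gam / 8 = e1 * sig.
      by rewrite /e1; field; rewrite gt_eqF.
    by apply: ler_wpM2l; [exact: ltW | rewrite lerDl].
  have h3 : psi y' <= psi y + gam / 8.
    have := Lpsi y' y Xy' Xy; rewrite ler_norml => /andP[_ h].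
    have en : enorm (y' - y) <= n%:R * r2.
      by apply: enorm_coord_le => i; rewrite !mxE; exact: ltW.
    have en2 : kk * enorm (y' - y) <= kn * r2.
      by rewrite /kn -mulrA; apply: ler_wpM2l.
    have : kn * r2 <= gam / 8.
      have : r2 <= gam / (8 * (kn + 1)) by rewrite ge_min lexx orbT.
      have : gam / (8 * (kn + 1)) * (8 * (kn + 1)) = gam.
        by rewrite mulfVK // mulf_neq0 // gt_eqF // ltr_wpDl.
      have := mulr_ge0 kn0 (ltW r20).
      nra.
    move: h en2; rewrite /kk; lra.
  have h4 := HS y' Sy'.
  move: h2; rewrite ler_norml => /andP[_ h2].
  rewrite /C; lra.
have Hconv : forall w, conv_hull (G @` (eball xj rho `&` cont_set X G)) w -> dotp w xi <= C.
  move=> w Cw; apply: (conv_lin Cw) => _ [y [Ey cy] <-]; exact: claim.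
pose r3 := gam / (4 * sig).
have r30 : 0 < r3 by apply: divr_gt0 => //; apply: mulr_gt0.
have [w [Cw bw]] := Hv rho rho0 _ (nbhsx_ballx etaj r3 r30).
have h5 : `|dotp etaj xi - dotp w xi| <= gam / 4.
  apply: le_trans (@dotp_diff _ _ etaj w xi r3 _) _.
    move=> i; rewrite distrC; exact: ltW (ball_coord bw i).
  have -> : gam / 4 = r3 * sig.
    by rewrite /r3; field; rewrite gt_eqF.
  by apply: ler_wpM2l; [exact: ltW | rewrite lerDl].
have := Hconv w Cw.
move: h5; rewrite ler_norml => /andP[_ h5].
rewrite /C /gam in h5 *; lra.
Qed.

End Core2.

Set Implicit Arguments. Unset Strict Implicit. Unset Printing Implicit Defensive.

Section Haus.
Variables (R : realType) (n : nat).
Notation V := 'rV[R]_n.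
Variable X : set V.

Lemma pdist_ge0 (p q : V * R) : 0 <= pdist p q.
Proof. exact: sqrtr_ge0. Qed.

Lemma le_sqrt_of (a b : R) : 0 <= a -> a ^+ 2 <= b -> a <= Num.sqrt b.
Proof.
move=> a0 h; rewrite -[a in a <= _](ger0_norm a0) -sqrtr_sqr ler_sqrt //.
exact: le_trans (sqr_ge0 a) h.
Qed.

Lemma sqrt_le_of (a b : R) : 0 <= a -> b <= a ^+ 2 -> Num.sqrt b <= a.
Proof.
move=> a0 h; rewrite -[a in _ <= a](ger0_norm a0) -sqrtr_sqr ler_sqrt //.
exact: sqr_ge0.
Qed.

Lemma pdist_ge_enorm (p q : V * R) : enorm (p.1 - q.1) <= pdist p q.
Proof.
apply: le_sqrt_of; first exact: enorm_ge0.
by rewrite lerDl sqr_ge0.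
Qed.

Lemma pdist_ge_coord (p q : V * R) i : `|p.1 ord0 i - q.1 ord0 i| <= pdist p q.
Proof.
apply: le_trans (pdist_ge_enorm p q).
by have := coord_le_enorm (p.1 - q.1) i; rewrite !mxE.
Qed.

Lemma pdist_ge_snd (p q : V * R) : `|p.2 - q.2| <= pdist p q.
Proof.
apply: le_sqrt_of => //.
by rewrite real_normK ?num_real // lerDr sqr_ge0.
Qed.

Lemma pdist_le (p q : V * R) : pdist p q <= \sum_i `|p.1 ord0 i - q.1 ord0 i| + `|p.2 - q.2|.
Proof.
set e := enorm (p.1 - q.1).
have e0 : 0 <= e := enorm_ge0 _.
apply: (@le_trans _ _ (e + `|p.2 - q.2|)); last first.
  apply: lerD => //; apply: le_trans (enorm_le_sum _) _.
  by apply: ler_sum => i _; rewrite !mxE.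
apply: sqrt_le_of; first by apply: addr_ge0.
rewrite -/e -[(p.2 - q.2) ^+ 2]real_normK ?num_real //.
have := mulr_ge0 e0 (normr_ge0 (p.2 - q.2)).
rewrite !expr2; nra.
Qed.

Lemma sum_le_n (F : 'I_n -> R) r : (forall i, F i <= r) -> \sum_i F i <= n%:R * r.
Proof.
move=> H; apply: (@le_trans _ _ (\sum_(i < n) r)); last by rewrite sumr_const card_ord mulr_natl.
by apply: ler_sum => i _.
Qed.

Lemma hd_step (g1 g2 : V -> R) B1 B2 MX h y :
  (forall x, X x -> enorm x <= MX) ->
  (forall z, X z -> `|g1 z| <= B1) -> (forall z, X z -> `|g2 z| <= B2) ->
  X y -> hdist X g1 g2 < h ->
  exists z, X z /\ g1 y <= g2 z + 2 * h /\ forall i, `|z ord0 i - y ord0 i| < 2 * h.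
Proof.
move=> HX H1 H2 Xy hh.
set Ac := closure (graph X g1); set Bc := closure (graph X g2).
have q0B : Bc (y, g2 y) by apply: subset_closure.
have aA : Ac (y, g1 y) by apply: subset_closure.
have coordX : forall x, X x -> forall i, `|x ord0 i| <= MX.
  by move=> x Xx i; apply: le_trans (coord_le_enorm x i) (HX x Xx).
have dB : forall a, has_lbound [set pdist a q | q in Bc].
  by move=> a; exists 0 => _ [q _ <-]; exact: pdist_ge0.
have nB : forall a, [set pdist a q | q in Bc] !=set0.
  by move=> a; exists (pdist a (y, g2 y)), (y, g2 y).
pose Sa := [set pt_set_dist a Bc | a in Ac].
have ubS : has_ubound Sa.
  exists (n%:R * (1 + MX + MX) + (1 + B1 + B2)) => _ [a Aa <-].
  apply: le_trans (ge_inf (dB a) _) _; first by exists (y, g2 y).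
  apply: le_trans (pdist_le _ _) _.
  have [p' [[Xp1 Hp2] bp]] := Aa _ (nbhsx_ballx a 1 ltr01).
  move: bp; rewrite /ball /= => -[b1 b2].
  apply: lerD.
    apply: sum_le_n => i /=.
    have := ball_coord b1 i.
    have := coordX _ Xp1 i; have := coordX _ Xy i.
    move=> h1 h2 h3.
    have -> : a.1 ord0 i - y ord0 i = (a.1 ord0 i - p'.1 ord0 i) + p'.1 ord0 i - y ord0 i by ring.
    apply: le_trans (ler_normB _ _) _; apply: lerD => //.
    apply: le_trans (ler_normD _ _) _; apply: lerD => //.
    by rewrite distrC ltW.
  move: b2; rewrite /ball /= Hp2 => b2.
  have h1 := H1 _ Xp1; have h2 := H2 _ Xy.
  have -> : a.2 - g2 y = (a.2 - g1 p'.1) + g1 p'.1 - g2 y by ring.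
  apply: le_trans (ler_normB _ _) _; apply: lerD => //.
  apply: le_trans (ler_normD _ _) _; apply: lerD => //.
  by move: b2 => /ltW; rewrite ?(distrC (g1 _)).
have hS : has_sup Sa by split => //; exists (pt_set_dist (y, g1 y) Bc), (y, g1 y).
have : pt_set_dist (y, g1 y) Bc < h.
  apply: le_lt_trans hh; apply: le_trans (ub_le_sup ubS _) _.
    by exists (y, g1 y).
  by rewrite /hdist /hausdorff le_max lexx.
move=> /(inf_lt (nB _)) [_ [q Bq <-] dq].
have h0 : 0 < h by apply: le_lt_trans dq; exact: pdist_ge0.
have [p [[Xp Hp] bp]] := Bq _ (nbhsx_ballx q h h0).
move: bp; rewrite /ball /= => -[b1 b2].
exists p.1; split => //; split.
  have := pdist_ge_snd (y, g1 y) q; rewrite /= => d2.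
  move: b2; rewrite /ball /= Hp => b2.
  move: d2 b2; rewrite !ler_norml !ltr_norml => /andP[_ d2] /andP[_ b2].
  lra.
move=> i.
have := pdist_ge_coord (y, g1 y) q i; rewrite /= => d1.
have := ball_coord b1 i => b.
have -> : p.1 ord0 i - y ord0 i = (p.1 ord0 i - q.1 ord0 i) - (y ord0 i - q.1 ord0 i) by ring.
apply: le_lt_trans (ler_normB _ _) _.
move: d1 dq b; lra.
Qed.

End Haus.

Set Implicit Arguments. Unset Strict Implicit. Unset Printing Implicit Defensive.

Section Meas.
Variable R : realType.
Notation lam := (@lebesgue_measure R).

Lemma lam_cc (a b : R) : (a <= b)%R -> (lam `[a, b]%classic = (b - a)%:E)%E.
Proof.
move=> ab; rewrite lebesgue_measure_itv /= lte_fin.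
case: (ltP a b) => [_|ba]; first by rewrite EFinB.
have -> : b = a by apply: le_anti; rewrite ba ab.
by rewrite subrr.

Qed.

Lemma int_cst_ind (k a b : R) : (0 <= k)%R -> (a <= b)%R ->
  (\int[lam]_(t in setT) (k * \1_(`[a, b]%classic) t)%:E = (k * (b - a))%:E)%E.
Proof.
move=> k0 ab.
under eq_integral do rewrite EFinM.
rewrite ge0_integralZl_EFin //.
- rewrite integral_indic ?setIT // EFinM; congr (_ * _)%E; exact: lam_cc.
- apply/measurable_EFinP.
  have := @measurable_indic _ R R setT `[a, b]%classic (measurable_itv _).
  exact.
Qed.

Lemma ind1E (a b t : R) : \1_(`[a, b]%classic) t = (if `[< a <= t <= b >] then 1 else 0 : R).
Proof.
rewrite indicE; case: asboolP => h.
  by rewrite mem_set //= in_itv /= h.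
by rewrite memNset //= in_itv /=; apply/negP.
Qed.

Lemma ind1_ge0 (a b t : R) : (0 <= (\1_(`[a, b]%classic) t : R))%R.
Proof. by rewrite ind1E; case: ifP. Qed.

Definition indb m (a b : 'I_m -> R) (y : 'I_m -> R) : R :=
  if `[< forall i, a i <= y i <= b i >] then 1%R else 0%R.
Definition vl m (a b : 'I_m -> R) : R := \prod_(i < m) (b i - a i).
Definition tl m (f : 'I_m.+1 -> R) : 'I_m -> R := fun i => f (lift ord0 i).
Definition cns m (t : R) (y : 'I_m -> R) : 'I_m.+1 -> R :=
  fun i => if unlift ord0 i is Some i' then y i' else t.

Lemma all_split m (P : 'I_m.+1 -> Prop) :
  (forall i, P i) <-> P ord0 /\ forall i, P (lift ord0 i).
Proof.
split => [H|[H0 H] i]; first by split.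
by case: (unliftP ord0 i) => [j ->|->].
Qed.

Lemma cns0 m t (y : 'I_m -> R) : cns t y ord0 = t.
Proof. by rewrite /cns unlift_none. Qed.
Lemma cnsS m t (y : 'I_m -> R) i : cns t y (lift ord0 i) = y i.
Proof. by rewrite /cns liftK. Qed.

Lemma indb_cns m (a b : 'I_m.+1 -> R) t y :
  indb a b (cns t y) = (\1_(`[a ord0, b ord0]%classic) t * indb (tl a) (tl b) y)%R.
Proof.
rewrite ind1E /indb.
have E : (forall i, a i <= cns t y i <= b i)%R <->
    (a ord0 <= t <= b ord0)%R /\ (forall i, tl a i <= y i <= tl b i)%R.
  rewrite all_split cns0; split => -[h1 h2]; split => // i;
    by [rewrite -(cnsS t y) h2 | rewrite cnsS h2].
case: asboolP => h; case: asboolP => h1; case: asboolP => h2;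
  rewrite ?mul1r ?mul0r //; exfalso; tauto.
Qed.

Lemma cover_ineq m : forall (c d : 'I_m -> R) (a b : nat -> 'I_m -> R) (w : nat -> R),
  (forall i, c i <= d i)%R -> (forall j i, a j i <= b j i)%R -> (forall j, 0 <= w j)%R ->
  (forall y, (forall i, c i <= y i <= d i)%R ->
     (1 <= \sum_(j <oo) (w j * indb (a j) (b j) y)%:E)%E) ->
  ((vl c d)%:E <= \sum_(j <oo) (w j * vl (a j) (b j))%:E)%E.
Proof.
elim: m => [|m IH] c d a b w cd ab w0 Hcov.
  have i1 : forall (a b y : 'I_0 -> R), indb a b y = 1%R.
    by move=> a' b' y; rewrite /indb asboolT // => -[].
  have := Hcov c; rewrite {1}/vl big_ord0 => /(_ (fun i => match i with Ordinal _ h => False_ind _ (notF h) end)) H.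
  apply: le_trans H _; apply: lee_nneseries => j *.
    by rewrite lee_fin i1 mulr1.
  by rewrite i1 /vl big_ord0.
set c0 := c ord0; set d0 := d ord0.
pose P' := vl (tl c) (tl d).
have P'0 : (0 <= P')%R by apply: prodr_ge0 => i _; rewrite subr_ge0; exact: cd.
pose h := fun j t => ((w j * vl (tl (a j)) (tl (b j))) * \1_(`[a j ord0, b j ord0]%classic) t)%:E.
have vlj0 : forall j, (0 <= w j * vl (tl (a j)) (tl (b j)))%R.
  move=> j; apply: mulr_ge0 => //; apply: prodr_ge0 => i _; rewrite subr_ge0; exact: ab.
have h0 : forall j t, (0 <= h j t)%E.
  by move=> j t; rewrite lee_fin; apply: mulr_ge0 => //; exact: ind1_ge0.
have mh : forall j, measurable_fun setT (h j).
  move=> j; apply/measurable_EFinP.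
  have := @measurable_indic _ R R setT `[a j ord0, b j ord0]%classic (measurable_itv _).
  move=> mi; apply: measurable_funM => //.
pose G := fun t => (\sum_(j <oo) h j t)%E.
have G0 : forall t, (0 <= G t)%E by move=> t; apply: nneseries_ge0 => j _ _.
have mG : measurable_fun setT G by exact: ge0_emeasurable_sum.
have hG : forall t, (c0 <= t <= d0)%R -> (P'%:E <= G t)%E.
  move=> t ht.
  have := IH (tl c) (tl d) (fun j => tl (a j)) (fun j => tl (b j))
    (fun j => w j * \1_(`[a j ord0, b j ord0]%classic) t)%R.
  move=> /(_ _ _ _ _) H; apply: le_trans (H _ _ _ _) _.
  - by move=> i; exact: cd.
  - by move=> j i; exact: ab.
  - by move=> j; apply: mulr_ge0 => //; exact: ind1_ge0.
  - move=> y hy; have := Hcov (cns t y).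
    have hb : forall i, (c i <= cns t y i <= d i)%R.
      by apply/all_split; rewrite cns0; split => // i; rewrite cnsS; exact: hy.
    move=> /(_ hb) H1; apply: le_trans H1 _; apply: lee_nneseries => j *.
      by rewrite lee_fin; apply: mulr_ge0 => //; rewrite /indb; case: ifP.
    by rewrite indb_cns mulrA.
  - apply: lee_nneseries => j *.
      by rewrite lee_fin; apply: mulr_ge0; [apply: mulr_ge0 => //; exact: ind1_ge0|
        apply: prodr_ge0 => i _; rewrite subr_ge0; exact: ab].
    by rewrite /h mulrAC.
have cd0 : (c0 <= d0)%R by exact: cd.
have step1 : ((vl c d)%:E = \int[lam]_(t in `[c0, d0]%classic) (cst P'%:E) t)%E.
  rewrite integral_cst; last exact: measurable_itv.
  rewrite /vl big_ord_recl mulrC EFinM; congr (_ * _)%E.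
  by symmetry; exact: lam_cc.
rewrite step1.
apply: (@le_trans _ _ (\int[lam]_(t in `[c0, d0]%classic) G t)%E).
  apply: ge0_le_integral => //.
  exact: (measurable_funS measurableT (@subsetT _ _) mG).
apply: (@le_trans _ _ (\int[lam]_(t in setT) G t)%E).
  apply: ge0_subset_integral => //; exact: measurable_itv.
rewrite integral_nneseries //.
apply: lee_nneseries => j *.
  by apply: integral_ge0 => t _.
rewrite (int_cst_ind (vlj0 j) (ab j ord0)).
rewrite lee_fin /vl big_ord_recl.
rewrite le_eqVlt; apply/orP; left; apply/eqP; rewrite /tl; ring.
Qed.

End Meas.

Set Implicit Arguments. Unset Strict Implicit. Unset Printing Implicit Defensive.

Section AE.
Variables (R : realType) (n : nat).
Notation V := 'rV[R]_n.
Variable X : set V.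

Lemma full_ae_dense S : open X -> full_ae X S -> dense_in X S.
Proof.
move=> oX [SX nS] z r Xz r0; apply: contrapT => Hn.
have : nbhs z X by move: oX; rewrite openE => /(_ z Xz).
move=> /nbhs_ballP [rho rho0 Hrho].
pose dl := Num.min r rho / 2.
have dl0 : 0 < dl by rewrite divr_gt0 // lt_min r0 rho0.
have dlr : dl < r.
  rewrite /dl ltr_pdivrMr // (@le_lt_trans _ _ r) ?ge_min ?lexx //.
  by rewrite mulr_natr mulr2n ltrDl.
have dlrho : dl < rho.
  rewrite /dl ltr_pdivrMr // (@le_lt_trans _ _ rho) ?ge_min ?lexx ?orbT //.
  by rewrite mulr_natr mulr2n ltrDl.
have e0 : 0 < dl ^+ n / 2 by rewrite divr_gt0 // exprn_gt0.
have [aa [bb [hab [cov hsum]]]] := nS _ e0.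
pose c := fun i => z ord0 i.
pose d := fun i => z ord0 i + dl.
pose a := fun j (i : 'I_n) => aa j ord0 i.
pose b := fun j (i : 'I_n) => bb j ord0 i.
have cd : forall i, c i <= d i by move=> i; rewrite /c /d lerDl ltW.
have ab : forall j i, a j i <= b j i by move=> j i; exact: hab.
have Hcov : forall y, (forall i, c i <= y i <= d i) ->
    (1 <= \sum_(j <oo) ((fun _ => 1) j * indb (a j) (b j) y)%:E)%E.
  move=> y hy.
  pose v : V := \row_i y i.
  have vz : forall i, `|v ord0 i - z ord0 i| < r.
    move=> i; rewrite mxE; apply: le_lt_trans dlr.
    have := hy i; rewrite /c /d => /andP[h1 h2].
    by rewrite ger0_norm ?subr_ge0 // lerBlDl.
  have Xv : X v.
    apply: Hrho; apply: coord_ball => // i; apply: le_lt_trans dlrho.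
    have := hy i; rewrite /c /d mxE => /andP[h1 h2].
    by rewrite ger0_norm ?subr_ge0 // lerBlDl.
  have nSv : ~ S v by move=> Sv; apply: Hn; exists v.
  have [j _ Bj] := cov v (conj Xv nSv).
  have ij : indb (a j) (b j) y = 1.
    rewrite /indb asboolT // => i; have := Bj i; rewrite mxE //.
  apply: le_trans (nneseries_lim_ge (P := xpredT) j.+1 _) => //.
    rewrite big_nat_recr //= ij mul1r.
    apply: leeDr; apply: sume_ge0 => k _.
    by rewrite lee_fin mul1r /indb; case: ifP.
  by move=> k _ _; rewrite lee_fin mul1r /indb; case: ifP.
have H := @cover_ineq R n c d a b (fun _ => 1) cd ab (fun _ => ler01) Hcov.
have : ((vl c d)%:E <= (dl ^+ n / 2)%:E)%E.
  apply: le_trans H _.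
  apply: lime_le; first by apply: is_cvg_nneseries => k _ _; rewrite lee_fin mul1r;
    apply: prodr_ge0 => i _; rewrite subr_ge0; exact: ab.
  apply: nearW => k; rewrite sumEFin lee_fin big_mkord.
  apply: ltW; apply: le_lt_trans (hsum k).
  by apply: ler_sum => j _; rewrite mul1r.
have -> : vl c d = dl ^+ n.
  rewrite /vl /c /d; under eq_bigr do rewrite addrC addKr.
  by rewrite prodr_const card_ord.
rewrite lee_fin.
have := exprn_gt0 n dl0; lra.
Qed.

End AE.

Set Implicit Arguments. Unset Strict Implicit. Unset Printing Implicit Defensive.

Section Main.
Variables (R : realType) (n : nat).
Notation V := 'rV[R]_n.
Variable X : set V.

Lemma bounded_coord (G : V -> V) :
  bounded_on X (fun v : V => Num.sqrt (\sum_(i < n) v ord0 i ^+ 2)) G ->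
  exists M, forall y, X y -> forall i, `|G y ord0 i| <= M.
Proof.
move=> [M HM]; exists M => y Xy i.
apply: le_trans (coord_le_enorm (G y) i) _.
have := HM y Xy; rewrite /= => h.
by rewrite /enorm /dotp; under eq_bigr do rewrite -expr2.
Qed.

Lemma f_bound (G : V -> V) M (xi : V) : (forall y, X y -> forall i, `|G y ord0 i| <= M) ->
  forall y, X y -> `|dotp (G y) xi| <= M * \sum_i `|xi ord0 i|.
Proof.
move=> HM y Xy; apply: le_trans (dotp_abs _ _) _.
rewrite mulr_sumr; apply: ler_sum => i _; apply: ler_wpM2r => //; exact: HM.
Qed.

Lemma main_core (large : set V -> Prop) (dd : (V -> R) -> (V -> R) -> R) :
  bounded_set_e X ->
  (forall S, large S -> S `<=` X /\ dense_in X S) ->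
  (forall f g, hdist X f g <= dd f g) ->
  forall (Fs : nat -> V -> V) (F : V -> V) (xs : nat -> V) (x : V) (etas : nat -> V) (eta : V),
  (forall k, bounded_on X (fun v : V => Num.sqrt (\sum_(i < n) v ord0 i ^+ 2)) (Fs k)
             /\ large (cont_set X (Fs k))) ->
  bounded_on X (fun v : V => Num.sqrt (\sum_(i < n) v ord0 i ^+ 2)) F /\ large (cont_set X F) ->
  (forall e : R, 0 < e -> exists N, forall k, (N <= k)%N ->
        (vec_metric X large dd (Fs k) F < e%:E)%E) ->
  (forall k, X (xs k)) -> X x ->
  (forall e : R, 0 < e -> exists N, forall k, (N <= k)%N -> enorm (xs k - x) < e) ->
  (forall e : R, 0 < e -> exists N, forall k, (N <= k)%N -> enorm (etas k - eta) < e) ->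
  (forall k, value X (Fs k) (xs k) (etas k)) ->
  value X F x eta.
Proof.
move=> [MX HMX] ldense hdd Fs F xs x etas eta HFs [bF lF] Hmet Xxs Xx Hxs Hetas Hval.
apply: contrapT => nv.
have [e [e0 ncl]] : exists e, 0 < e /\
    ~ closure (conv_hull (F @` (eball x e `&` cont_set X F))) eta.
  apply: contrapT => H; apply: nv => e e0; apply: contrapT => nc; apply: H; by exists e.
set A := F @` (eball x e `&` cont_set X F) in ncl.
have [Bn [nB KB]] : exists Bn, nbhs eta Bn /\ ~ (conv_hull A `&` Bn !=set0).
  apply: contrapT => H; apply: ncl => Bn nB; apply: contrapT => nK; apply: H; by exists Bn.
move: nB => /nbhs_ballP [r r0 Hr].
pose r' := Num.min r 1.
have r'0 : 0 < r' by rewrite lt_min r0 ltr01.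
have r'1 : r' <= 1 by rewrite ge_min lexx orbT.
have Hsep : forall w, conv_hull A w -> exists i, r' <= `|eta ord0 i - w ord0 i|.
  move=> w Cw; apply: contrapT => H; apply: KB; exists w; split => //; apply: Hr.
  apply: coord_ball => // i; rewrite distrC; apply: lt_le_trans (_ : _ < r') _.
    by rewrite ltNge; apply/negP => hi; apply: H; exists i.
  by rewrite ge_min lexx.
have [SX dS] := ldense _ lF.
have A0 : A !=set0.
  have en0 : 0 < e / (n%:R + 1) by apply: divr_gt0 => //; exact: ltr_wpDl.
  have [y [cy Hy]] := dS x _ Xx en0.
  exists (F y), y => //; split => //.
  rewrite /eball /=; apply: le_lt_trans (enorm_coord_le (r := e / (n%:R + 1)) _) _.
    by move=> i; rewrite !mxE; exact: ltW.
  by rewrite mulrA ltr_pdivrMr ?ltr_wpDl // mulrDr mulr1 mulrC ltrDl.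
have [M HM] := bounded_coord bF.
have HMA : forall z, A z -> forall i, `|z ord0 i| <= M.
  by move=> _ [y [_ [Xy _]] <-]; exact: HM.
have [xi [delta [nxi [delta0 Hxi]]]] := separate A0 HMA r'0 r'1 Hsep.
have n0 : (0 < n)%N.
  case: (posnP n) => // n0; exfalso; move: nxi.
  rewrite /enorm /dotp big1 ?sqrtr0; first by move=> /esym/eqP; rewrite oner_eq0.
  by case=> i hi; exfalso; move: hi; rewrite n0.
have nR0 : 0 < n%:R :> R by rewrite ltr0n.
pose c := dotp eta xi - delta.
pose sx := \sum_i `|xi ord0 i|.
have sx0 : 0 <= sx by apply: sumr_ge0.
have sxn : sx <= n%:R.
  have := @sum_le_n _ n (fun i => `|xi ord0 i|) 1; rewrite mulr1; apply => i.
  by rewrite -nxi; exact: coord_le_enorm.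
pose f := fun y => dotp (F y) xi.
pose B2 := M * sx.
have fB : forall y, X y -> `|f y| <= B2 by apply: f_bound.
pose k := (Num.trunc (n%:R * (`|B2 - c| / e))).+1.
pose kR := k%:R : R.
have kRgt : n%:R * (`|B2 - c| / e) < kR.
  by apply: truncnS_gt.
pose L := kR / n%:R.
have L0 : 0 <= L by apply: divr_ge0.
pose phi := fun y : V => c + L * \sum_i `|y ord0 i - x ord0 i|.
have phi_up : upset X large f k phi.
  split.
    move=> a b Xa Xb.
    have -> : phi a - phi b = L * (\sum_i `|a ord0 i - x ord0 i| - \sum_i `|b ord0 i - x ord0 i|).
      by rewrite /phi; ring.
    rewrite normrM (ger0_norm L0) -sumrB.
    apply: (@le_trans _ _ (L * (n%:R * enorm (a - b)))).
      apply: ler_wpM2l => //; apply: le_trans (ler_norm_sum _ _ _) _.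
      apply: sum_le_n => i; apply: le_trans (ler_dist_dist _ _) _.
      have -> : a ord0 i - x ord0 i - (b ord0 i - x ord0 i) = (a - b) ord0 i by rewrite !mxE; ring.
      exact: coord_le_enorm.
    by rewrite mulrA /L divfK ?gt_eqF.
  exists (cont_set X F); split => // y cy.
  have [Ey|nEy] := ltP (enorm (y - x)) e.
    have : f y <= c by apply: Hxi; exists y.
    move=> h; apply: le_trans h _; rewrite lerDl; apply: mulr_ge0 => //; exact: sumr_ge0.
  have Xy : X y by case: cy.
  have s1 : e <= \sum_i `|y ord0 i - x ord0 i|.
    apply: le_trans nEy (le_trans (enorm_le_sum _) _).
    by apply: ler_sum => i _; rewrite !mxE.
  have : B2 - c <= L * e.
    apply: le_trans (ler_norm _) _.
    rewrite /L mulrAC ler_pdivlMr // mulrC.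
    move: kRgt; rewrite mulrA ltr_pdivrMr // => /ltW.
    by rewrite mulrC.
  have := ler_wpM2l L0 s1.
  have := fB y Xy; rewrite ler_norml => /andP[_ h].
  rewrite /phi; lra.
have gle : forall z, X z -> up_env X large f k z <= phi z.
  by move=> z Xz; exact: (up_env_le ldense fB Xz phi_up).
have gB : forall z, X z -> `|up_env X large f k z| <= B2 + kR * n%:R.
  by move=> z Xz; exact: (up_env_bound ldense k lF fB Xz).
pose tau := delta / (n%:R + 3 + 3 * L * n%:R).
have den0 : 0 < n%:R + 3 + 3 * L * n%:R.
  by apply: ltr_wpDr; [apply: mulr_ge0 => //; apply: mulr_ge0 | rewrite ltr_wpDl].
have tau0 : 0 < tau by apply: divr_gt0.
have taueq : tau * (n%:R + 3 + 3 * L * n%:R) = delta by rewrite /tau divfK // gt_eqF.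
have [N HN] := Hmet tau tau0.
have [N1 HN1] := Hxs tau tau0.
have [N2 HN2] := Hetas tau tau0.
pose j := maxn N (maxn N1 N2).
have jN : (N <= j)%N by rewrite leq_maxl.
have jN1 : (N1 <= j)%N by rewrite /j (leq_trans (leq_maxl N1 N2)) // leq_maxr.
have jN2 : (N2 <= j)%N by rewrite /j (leq_trans (leq_maxr N1 N2)) // leq_maxr.
have [bFj lFj] := HFs j.
have [Mj HMj] := bounded_coord bFj.
pose fj := fun y => dotp (Fs j y) xi.
pose B2j := Mj * sx.
have fjB : forall y, X y -> `|fj y| <= B2j by apply: f_bound.
have hd : hdist X (up_env X large fj k) (up_env X large f k) < tau.
  apply: le_lt_trans (hdd _ _) _.
  have H1 := HN j jN.
  have h1 : (scal_metric X large dd fj f <= vec_metric X large dd (Fs j) F)%E.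
    by apply: ereal_sup_ubound; exists xi.
  have h2 : ((Num.max (dd (low_env X large fj k) (low_env X large f k))
                 (dd (up_env X large fj k) (up_env X large f k)))%:E
             <= scal_metric X large dd fj f)%E.
    by apply: ereal_sup_ubound; exists k.
  have := lt_le_trans (le_lt_trans h2 (le_lt_trans h1 H1)) (lexx _).
  rewrite lte_fin => h3; apply: le_lt_trans h3; by rewrite le_max lexx orbT.
have Xxj := Xxs j.
have vj : dotp (etas j) xi <= up_env X large fj k (xs j).
  rewrite up_envE; apply: lb_le_inf.
    by exists B2j, (fun _ => B2j) => //; exact: (cst_upset ldense k lFj fjB).
  move=> _ [psi [Lpsi Spsi] <-].
  exact: (value_le ldense Xxj (Hval j) Lpsi Spsi).
have gjB : forall z, X z -> `|up_env X large fj k z| <= B2j + kR * n%:R.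
  by move=> z Xz; exact: (up_env_bound ldense k lFj fjB Xz).
have [z [Xz [hz1 hz2]]] := hd_step HMX gjB gB Xxj hd.
have gz := gle z Xz.
have sz : \sum_i `|z ord0 i - x ord0 i| <= n%:R * (3 * tau).
  apply: sum_le_n => i.
  have := HN1 j jN1 => hx.
  have := coord_le_enorm (xs j - x) i; rewrite !mxE => hc.
  have -> : z ord0 i - x ord0 i = (z ord0 i - xs j ord0 i) + (xs j ord0 i - x ord0 i) by ring.
  apply: le_trans (ler_normD _ _) _.
  have := hz2 i; lra.
have he : `|dotp eta xi - dotp (etas j) xi| <= tau * sx.
  apply: dotp_diff => i.
  have := HN2 j jN2 => he.
  have := coord_le_enorm (etas j - eta) i; rewrite !mxE distrC => hc.
  lra.
have Lsz := ler_wpM2l L0 sz.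
have tsx : tau * sx <= tau * n%:R by apply: ler_wpM2l => //; exact: ltW.
move: he; rewrite ler_norml => /andP[_ he].
move: gz; rewrite /phi => gz.
rewrite /c in gz.
have : L * (n%:R * (3 * tau)) = 3 * L * n%:R * tau by ring.
move: taueq; nra.
Qed.

End Main.

Set Implicit Arguments. Unset Strict Implicit. Unset Printing Implicit Defensive.

Lemma iter_int_ge0 (R : realType) m (f : 'rV[R]_m -> \bar R) :
  (forall v, (0 <= f v)%E) -> (0 <= iter_int f)%E.
Proof.
elim: m f => [|m IH] f f0 /=; first exact: f0.
by apply: integral_ge0 => a _; apply: IH => v; exact: f0.
Qed.

Unset Implicit Arguments.
Theorem proposition2p4 (R : realType) (n : nat) (X : set 'rV[R]_n) :
  X !=set0 -> open X -> bounded_set_e X ->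
  (forall (Fs : nat -> 'rV[R]_n -> 'rV[R]_n) (F : 'rV[R]_n -> 'rV[R]_n)
          (xs : nat -> 'rV[R]_n) (x : 'rV[R]_n)
          (etas : nat -> 'rV[R]_n) (eta : 'rV[R]_n),
     (forall k, is_Ccm X (Fs k)) -> is_Ccm X F ->
     (forall e : R, 0 < e -> exists N, forall k, (N <= k)%N ->
        (s_metric X (Fs k) F < e%:E)%E) ->
     (forall k, X (xs k)) -> X x ->
     (forall e : R, 0 < e -> exists N, forall k, (N <= k)%N -> enorm (xs k - x) < e) ->
     (forall e : R, 0 < e -> exists N, forall k, (N <= k)%N -> enorm (etas k - eta) < e) ->
     (forall k, value X (Fs k) (xs k) (etas k)) ->
     value X F x eta) /\
  (forall (Fs : nat -> 'rV[R]_n -> 'rV[R]_n) (F : 'rV[R]_n -> 'rV[R]_n)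
          (xs : nat -> 'rV[R]_n) (x : 'rV[R]_n)
          (etas : nat -> 'rV[R]_n) (eta : 'rV[R]_n),
     (forall k, is_Cae X (Fs k)) -> is_Cae X F ->
     (forall e : R, 0 < e -> exists N, forall k, (N <= k)%N ->
        (r_metric X (Fs k) F < e%:E)%E) ->
     (forall k, X (xs k)) -> X x ->
     (forall e : R, 0 < e -> exists N, forall k, (N <= k)%N -> enorm (xs k - x) < e) ->
     (forall e : R, 0 < e -> exists N, forall k, (N <= k)%N -> enorm (etas k - eta) < e) ->
     (forall k, value X (Fs k) (xs k) (etas k)) ->
     value X F x eta).
Proof.
move=> _ oX bX; split.
- move=> Fs F xs x etas eta HFs HF Hm Xxs Xx Hxs Hetas Hv.
  apply: (@main_core R n X (comeager X) (hdist X)) Hm Xxs Xx Hxs Hetas Hv => //.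
  + move=> S lS; split; first exact: (proj1 lS).
    exact: comeager_dense.
- move=> Fs F xs x etas eta HFs HF Hm Xxs Xx Hxs Hetas Hv.
  apply: (@main_core R n X (full_ae X) (ddist X)) Hm Xxs Xx Hxs Hetas Hv => //.
  + move=> S lS; split; first exact: (proj1 lS).
    exact: full_ae_dense.
  + move=> f g; rewrite /ddist lerDl /int_abs_diff; apply: fine_ge0.
    apply: iter_int_ge0 => v; case: ifP => _ //; rewrite lee_fin //.
Qed.
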